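(* Let $G$ be connected with weights $w:E\to\mathbb{R}_{>0}$, let $\pi$ be a vertex order and let $m_C$ be a customized metric on $G_\pi^*$. Run the perfect customization: set $m:=m_C$, and process the edges $\{x,y\}$ of $G_\pi^*$, with $x$ the lower-ranked endpoint, in nonincreasing order of the rank of $x$ (ties arbitrary); when processing $\{x,y\}$, for every vertex $z\neq y$ of rank larger than the rank of $x$ that is adjacent to both $x$ and $y$ in $G_\pi^*$, set $m(\{x,y\}):=\min\{m(\{x,y\}),m(\{x,z\})+m(\{z,y\})\}$ using current values. Then the resulting metric $m_P$ satisfies $m_P(\{x,y\})=\mathrm{dist}_I(x,y)$ for every edge $\{x,y\}$ of $G_\pi^*$, i.e. $m_P$ is the perfect metric.
   Context: Let $G=(V,E)$ be a finite simple undirected graph with $n=|V|$ vertices. A vertex order is a bijection $\pi:\{1,\dots,n\}\to V$; the rank of $v$ is $\pi^{-1}(v)$. Contracting a vertex $v$ in a graph means deleting $v$ and its incident edges and adding an edge between every pair of former neighbors of $v$ that are not already adjacent. The core graph $G_{\pi,i}$ is obtained from $G$ by contracting $\pi(1),\dots,\pi(i-1)$ in this order. $G_\pi^*$ is the graph on $V$ whose edge set is the union of the edge sets of all $G_{\pi,i}$, $i=1,\dots,n$ (i.e. $G$ together with all edges inserted during the contractions). Let $w:E\to\mathbb{R}_{>0}$ and let $\mathrm{dist}_I(s,t)$ be the shortest $s$–$t$ path length in $(G,w)$. A metric is a map $m$ assigning to every edge of $G_\pi^*$ a value in $\mathbb{R}_{>0}\cup\{\infty\}$; the $m$-length of a path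 in $G_\pi^*$ is the sum of $m$ over its edges. An up-down path is a path $v_0,\dots,v_k$ in $G_\pi^*$ for which there is $j$ with the ranks strictly increasing along $v_0,\dots,v_j$ and strictly decreasing along $v_j,\dots,v_k$. $\mathrm{dist}_A(s,t)$ is the minimum $m$-length of an $s$–$t$ path in $G_\pi^*$, and $\mathrm{dist}_{UD}(s,t)$ the minimum $m$-length of an up-down $s$–$t$ path ($\infty$ if none). The metric $m$ respects $w$ if $\mathrm{dist}_A(s,t)=\mathrm{dist}_I(s,t)$ for all $s,t$; it is customized if moreover $\mathrm{dist}_{UD}(s,t)=\mathrm{dist}_A(s,t)$ for all $s,t$. The perfect metric is the metric $m_P(\{x,y\})=\mathrm{dist}_I(x,y)$ for every edge $\{x,y\}$ of $G_\pi^*$. *)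

(* Defs.v *)
From HB Require Import structures.
From mathcomp Require Import all_boot all_order all_algebra.
Set Implicit Arguments. Unset Strict Implicit. Unset Printing Implicit Defensive.
Import Order.TTheory GRing.Theory Num.Theory.
Local Open Scope ring_scope.

(* Extended nonnegative values: None stands for +infinity. *)
Definition ext (R : realFieldType) := option R.

Definition eadd (R : realFieldType) (a b : ext R) : ext R :=
  match a, b with Some x, Some y => Some (x + y) | _, _ => None end.

Definition emin (R : realFieldType) (a b : ext R) : ext R :=
  match a, b with
  | None, _ => b
  | _, None => a
  | Some x, Some y => Some (Num.min x y)
  end.

Definition ele (R : realFieldType) (a b : ext R) : bool :=
  match a, b with
  | _, None => true
  | None, Some _ => false
  | Some x, Some y => x <= y
  end.

Definition epos (R : realFieldType) (a : ext R) : Prop :=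
  match a with None => True | Some x => 0 < x end.

Section Graphs.
Variable T : finType.

(* contracting v: delete v, join all pairs of former neighbours of v.
   Deleted vertices are kept in T but become isolated. *)
Definition contract (g : rel T) (v : T) : rel T :=
  fun x y => [&& x != v, y != v & g x y || [&& g x v, g v y & x != y]].

(* vertex order given as the sequence s = [pi(1); ...; pi(n)];
   rank v = index v s (0-based). *)
Definition rank (s : seq T) (v : T) : nat := index v s.

(* core graph G_{pi,k+1}: contract pi(1),...,pi(k) in this order *)
Definition core (e : rel T) (s : seq T) (k : nat) : rel T :=
  foldl contract e (take k s).

Definition gstar (e : rel T) (s : seq T) : rel T :=
  fun x y => [exists k : 'I_(size s), core e s k x y].

(* simple x-y path x :: p in the graph g *)
Definition spath (g : rel T) (x y : T) (p : seq T) : Prop :=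
  [/\ path g x p, uniq (x :: p) & last x p = y].

Fixpoint wlen (R : realFieldType) (w : T -> T -> R) (x : T) (p : seq T) : R :=
  match p with [::] => 0 | y :: p' => w x y + wlen w y p' end.

Fixpoint mlen (R : realFieldType) (m : T -> T -> ext R) (x : T) (p : seq T)
  : ext R :=
  match p with [::] => Some 0 | y :: p' => eadd (m x y) (mlen m y p') end.

Definition updown (s : seq T) (x : T) (p : seq T) : bool :=
  [exists j : 'I_(size (x :: p)),
     sorted (fun a b => rank s a < rank s b) (take j.+1 (x :: p)) &&
     sorted (fun a b => rank s b < rank s a) (drop j (x :: p))]%N.

Definition is_emin (R : realFieldType) (P : seq T -> Prop)
  (L : seq T -> ext R) (v : ext R) : Prop :=
  ((exists p, P p /\ L p = v) \/ ((forall p, ~ P p) /\ v = None)) /\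
  (forall p, P p -> ele v (L p)).

Definition distI (R : realFieldType) (e : rel T) (w : T -> T -> R) (x y : T)
  (v : ext R) : Prop :=
  is_emin (spath e x y) (fun p => Some (wlen w x p)) v.

Definition distA (R : realFieldType) (gs : rel T) (m : T -> T -> ext R)
  (x y : T) (v : ext R) : Prop :=
  is_emin (spath gs x y) (mlen m x) v.

Definition distUD (R : realFieldType) (s : seq T) (gs : rel T)
  (m : T -> T -> ext R) (x y : T) (v : ext R) : Prop :=
  is_emin (fun p => spath gs x y p /\ updown s x p) (mlen m x) v.

Definition respects (R : realFieldType) (e : rel T) (w : T -> T -> R)
  (s : seq T) (m : T -> T -> ext R) : Prop :=
  forall x y v, distI e w x y v -> distA (gstar e s) m x y v.

Definition customized (R : realFieldType) (e : rel T) (w : T -> T -> R)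
  (s : seq T) (m : T -> T -> ext R) : Prop :=
  respects e w s m /\
  (forall x y v, distA (gstar e s) m x y v -> distUD s (gstar e s) m x y v).

Definition upd (R : realFieldType) (m : T -> T -> ext R) (x y : T) (v : ext R)
  : T -> T -> ext R :=
  fun a b => if ((a == x) && (b == y)) || ((a == y) && (b == x)) then v
             else m a b.

(* processing the edge {x,y} (x the lower-ranked endpoint) *)
Definition perfect_step (R : realFieldType) (e : rel T) (s : seq T)
  (m : T -> T -> ext R) (xy : T * T) : T -> T -> ext R :=
  let x := xy.1 in let y := xy.2 in
  let v := foldl (fun acc z =>
             if [&& z != y, (rank s x < rank s z)%N, gstar e s x z
                  & gstar e s z y]
             then emin acc (eadd (m x z) (m z y)) else acc)
           (m x y) (enum T) in
  upd m x y v.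

Definition perfect_customization (R : realFieldType) (e : rel T) (s : seq T)
  (mC : T -> T -> ext R) (es : seq (T * T)) : T -> T -> ext R :=
  foldl (perfect_step e s) mC es.

End Graphs.

(* Main.v *)
Require Import Defs.
From HB Require Import structures.
From mathcomp Require Import all_boot all_order all_algebra.
From mathcomp Require Import lra.
Import Order.TTheory GRing.Theory Num.Theory.
Local Open Scope ring_scope.
Set Implicit Arguments. Unset Strict Implicit.

Lemma minE' (R : realFieldType) (x y : R) : Num.min x y = x /\ x <= y \/ Num.min x y = y /\ y <= x.
Proof. rewrite minEle; case: (boolP (x <= y)) => h; [left|right]; split => //.
by move: h; rewrite -ltNge => /ltW. Qed.

Lemma ele_refl (R : realFieldType) (a : ext R) : ele a a.
Proof. by case: a => //= x. Qed.

Lemma ele_trans (R : realFieldType) (a b c : ext R) : ele a b -> ele b c -> ele a c.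
Proof. case: a; case: b; case: c => //= x y z; exact: le_trans. Qed.

Lemma ele_anti (R : realFieldType) (a b : ext R) : ele a b -> ele b a -> a = b.
Proof. case: a => [x|]; case: b => [y|] //= h1 h2.
congr Some; apply/eqP; by rewrite eq_le h1 h2. Qed.

Lemma ele_None (R : realFieldType) (b : ext R) : ele None b -> b = None.
Proof. by case: b. Qed.

Lemma emin_l (R : realFieldType) (a b : ext R) : ele (emin a b) a.
Proof. case: a => [x|]; case: b => [y|] //=; try exact: lexx.
case: (minE' x y) => -[-> //]. Qed.

Lemma emin_r (R : realFieldType) (a b : ext R) : ele (emin a b) b.
Proof. case: a => [x|]; case: b => [y|] //=; try exact: lexx.
case: (minE' x y) => -[-> //]. Qed.

Lemma emin_or (R : realFieldType) (a b : ext R) : emin a b = a \/ emin a b = b.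
Proof. case: a => [x|]; case: b => [y|] /=; try by [left|right].
case: (minE' x y) => -[-> _]; by [left|right]. Qed.

Lemma emin_glb (R : realFieldType) (c a b : ext R) : ele c a -> ele c b -> ele c (emin a b).
Proof. by case: (emin_or a b) => ->. Qed.

Lemma eadd_C (R : realFieldType) (a b : ext R) : eadd a b = eadd b a.
Proof. by case: a; case: b => //= x y; rewrite addrC. Qed.

Lemma eadd_0 (R : realFieldType) (a : ext R) : eadd a (Some 0) = a.
Proof. by case: a => //= x; rewrite addr0. Qed.

Lemma eadd_mono (R : realFieldType) (a a' b b' : ext R) :
  ele a a' -> ele b b' -> ele (eadd a b) (eadd a' b').
Proof. case: a; case: a'; case: b; case: b' => //= *; exact: lerD. Qed.


Lemma contract_sym (T : finType) (g : rel T) v : symmetric g -> symmetric (contract g v).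
Proof.
move=> sg x y; rewrite /contract (sg y x) (sg y v) (sg v x) (eq_sym y x).
by case: (x != v); case: (y != v); case: (g x v); case: (g v y); case: (g x y).
Qed.

Lemma contract_irr (T : finType) (g : rel T) v : irreflexive g -> irreflexive (contract g v).
Proof. by move=> ig x; rewrite /contract ig eqxx /= !andbF. Qed.

Lemma fold_sym (T : finType) (g : rel T) l : symmetric g -> symmetric (foldl (@contract _) g l).
Proof. elim: l g => //= v l IH g sg; apply: IH; exact: contract_sym. Qed.

Lemma fold_irr (T : finType) (g : rel T) l : irreflexive g -> irreflexive (foldl (@contract _) g l).
Proof. elim: l g => //= v l IH g sg; apply: IH; exact: contract_irr. Qed.

Lemma fold_iso (T : finType) (g : rel T) l v :
  (forall y, g v y = false) -> forall y, foldl (@contract _) g l v y = false.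
Proof.
elim: l g => //= u l IH g h; apply IH => y; by rewrite /contract !h /= !andbF.
Qed.

Lemma fold_iso_mem (T : finType) (g : rel T) l v :
  v \in l -> forall y, foldl (@contract _) g l v y = false.
Proof.
elim: l g => //= u l IH g; rewrite in_cons => /orP [/eqP ->|h]; last exact: IH.
by apply: fold_iso => y; rewrite /contract eqxx.
Qed.

Lemma fold_keep (T : finType) (g : rel T) l a b :
  g a b -> a \notin l -> b \notin l -> foldl (@contract _) g l a b.
Proof.
elim: l g => //= u l IH g h; rewrite !in_cons !negb_or => /andP[au al] /andP[bu bl].
by apply IH => //; rewrite /contract au bu h.
Qed.

Lemma gs_sym (T : finType) (e : rel T) s : symmetric e -> symmetric (gstar e s).
Proof. move=> se x y; apply: eq_existsb => k; by rewrite /core fold_sym. Qed.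

Lemma gs_irr (T : finType) (e : rel T) s : irreflexive e -> irreflexive (gstar e s).
Proof. move=> ie x; apply/negbTE/existsPn => k; by rewrite /core fold_irr. Qed.

Lemma rank_inj (T : finType) (s : seq T) a b :
  (forall v, v \in s) -> rank s a = rank s b -> a = b.
Proof.
rewrite /rank => hs h; by rewrite -(nth_index a (hs a)) -(nth_index a (hs b)) h.
Qed.

Lemma gs_core (T : finType) (e : rel T) s x c :
  (forall v, v \in s) -> gstar e s x c -> (rank s x < rank s c)%N ->
  core e s (rank s x) x c.
Proof.
move=> hs /existsP [k hk] hr; set r := rank s x.
case: (leqP k r) => hkr.
- have -> : core e s r = foldl (@contract _) (core e s k) (drop k (take r s)).
    by rewrite /core -foldl_cat -{1}(cat_take_drop k (take r s)) take_takel.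
  apply: fold_keep => //.
  + apply/negP => /mem_drop; by rewrite in_take // ltnn.
  + apply/negP => /mem_drop; rewrite in_take // => h.
    by move: (ltn_trans h hr); rewrite ltnn.
- by move: hk; rewrite /core fold_iso_mem // in_take.
Qed.

Lemma gs_clique (T : finType) (e : rel T) s x a b :
  symmetric e -> (forall v, v \in s) ->
  gstar e s x a -> gstar e s x b -> (rank s x < rank s a)%N ->
  (rank s x < rank s b)%N -> a != b -> gstar e s a b.
Proof.
move=> se hs ha hb ra rb ab.
have ca := gs_core hs ha ra; have cb := gs_core hs hb rb.
set r := rank s x in ca cb ra rb.
have ra' : (r.+1 < size s)%N.
  by apply: (leq_ltn_trans ra); rewrite /rank index_mem.
apply/existsP; exists (Ordinal ra') => /=.
rewrite /core (take_nth x (ltnW ra')) /r /rank (nth_index x (hs x)) foldl_rcons.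
change (contract (core e s r) x a b).
have sc : symmetric (core e s r) by apply: fold_sym.
have ax : a != x by apply/eqP => h; move: ra; rewrite h ltnn.
have bx : b != x by apply/eqP => h; move: rb; rewrite h ltnn.
by rewrite /contract ax bx ab /= (sc a x) ca cb orbT.
Qed.


Lemma wlen_cat (R : realFieldType) (T : finType) (w : T -> T -> R) x p1 p2 :
  wlen w x (p1 ++ p2) = wlen w x p1 + wlen w (last x p1) p2.
Proof. elim: p1 x => /= [|y p IH] x; first by rewrite add0r. by rewrite IH addrA. Qed.

Lemma wlen_ge0 (R : realFieldType) (T : finType) (e : rel T) (w : T -> T -> R) x p :
  (forall a b, e a b -> 0 <= w a b) -> path e x p -> 0 <= wlen w x p.
Proof.
move=> hw; elim: p x => //= y p IH x /andP [hxy hp].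
by apply: addr_ge0; [exact: hw | exact: IH].
Qed.

Lemma shorten_w (R : realFieldType) (T : finType) (e : rel T) (w : T -> T -> R) p x :
  (forall a b, e a b -> 0 <= w a b) -> path e x p ->
  exists q, spath e x (last x p) q /\ wlen w x q <= wlen w x p.
Proof.
move=> hw; elim: p x => [|y p IH] x.
  move=> _; exists [::]; split => //; split => //=.
move=> /= /andP [hxy hp]; have [q' [[pq' uq' lq'] wq']] := IH y hp.
case: (boolP (x \in y :: q')) => hx.
- have [p1 [p2 E]] : exists p1 p2, y :: q' = p1 ++ x :: p2.
    by case/splitPr: hx => p1 p2; exists p1, p2.
  set l := y :: q' in E.
  have pl : path e x l by rewrite /l /= hxy pq'.
  have ul : uniq l by exact: uq'.
  move: pl ul; rewrite E cat_path cat_uniq => /andP [pp1 /= /andP [he pp2]].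
  move=> /and3P [_ _ u2].
  exists p2; split; first split => //.
  + rewrite -lq' -[last y q']/(last x (y :: q')) -/l E last_cat /=.
    by [].
  + have : wlen w x l = w x y + wlen w y q' by [].
    rewrite E wlen_cat /= => h.
    have h1 := wlen_ge0 hw pp1; have h2 := hw _ _ he.
    lra.
- exists (y :: q'); split; first split => //=.
  + by rewrite hxy pq'.
  + by rewrite hx; exact: uq'.
  + rewrite /=; lra.
Qed.


Lemma emin_None_r (R : realFieldType) (a : ext R) : emin a None = a.
Proof. by case: a. Qed.

Definition lmin (R : realFieldType) (T : finType) (Pb : pred (seq T))
  (L : seq T -> ext R) (l : seq (seq T)) : ext R :=
  foldr (fun p acc => if Pb p then emin (L p) acc else acc) None l.

Lemma lmin_aux (R : realFieldType) (T : finType) (Pb : pred (seq T))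
  (L : seq T -> ext R) l :
  let v := lmin Pb L l in
  ((exists p, p \in l /\ Pb p /\ L p = v) \/ ((forall p, p \in l -> ~~ Pb p) /\ v = None))
  /\ (forall p, p \in l -> Pb p -> ele v (L p)).
Proof.
elim: l => [|p0 l IH] /=.
  by split => //; right.
rewrite /lmin /= -/(lmin Pb L l).
move: IH; set v' := lmin Pb L l => -[IH1 IH2].
case: (boolP (Pb p0)) => h0.
- split.
  + case: IH1 => [[p [pl [pp Lp]]]|[_ ->]].
    * case: (emin_or (L p0) v') => ->.
      - by left; exists p0; rewrite mem_head.
      - by left; exists p; rewrite in_cons pl orbT.
    * by left; exists p0; rewrite mem_head emin_None_r.
  + move=> p; rewrite in_cons => /orP [/eqP -> _|pl pp]; first exact: emin_l.
    exact: ele_trans (emin_r _ _) (IH2 p pl pp).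
- split.
  + case: IH1 => [[p [pl [pp Lp]]]|[hn ->]].
    * by left; exists p; rewrite in_cons pl orbT.
    * right; split => // p; rewrite in_cons => /orP [/eqP -> //|]; exact: hn.
  + move=> p; rewrite in_cons => /orP [/eqP ->|pl pp]; first by rewrite (negbTE h0).
    exact: IH2.
Qed.

Lemma lminP (R : realFieldType) (T : finType) (P : seq T -> Prop) (Pb : pred (seq T))
  (L : seq T -> ext R) l :
  (forall p, P p <-> Pb p) -> (forall p, Pb p -> p \in l) ->
  is_emin P L (lmin Pb L l).
Proof.
move=> hP hl; have [h1 h2] := lmin_aux Pb L l; split.
- case: h1 => [[p [_ [pp Lp]]]|[hn ->]].
  + by left; exists p; split => //; apply/hP.
  + right; split => // p /hP pp; move: (hn p (hl p pp)); by rewrite pp.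
- by move=> p /hP pp; apply: h2 => //; apply: hl.
Qed.

Lemma is_emin_uniq (R : realFieldType) (T : finType) (P : seq T -> Prop)
  (L : seq T -> ext R) v v' : is_emin P L v -> is_emin P L v' -> v = v'.
Proof.
move=> [a1 a2] [b1 b2]; apply: ele_anti.
- case: b1 => [[p [pp <-]]|[_ ->]]; [exact: a2 | by case: v {a1 a2}].
- case: a1 => [[p [pp <-]]|[_ ->]]; [exact: b2 | by case: v' {b1 b2}].
Qed.

Fixpoint allseqs (T : finType) (n : nat) : seq (seq T) :=
  if n is n'.+1 then [::] :: [seq a :: p | a <- enum T, p <- allseqs T n']
  else [:: [::]].

Lemma mem_allseqs (T : finType) n (p : seq T) : (size p <= n)%N -> p \in allseqs T n.
Proof.
elim: n p => [|n IH] [|a p] //=.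
rewrite ltnS => hp; rewrite in_cons; apply/orP; right.
by apply: (allpairs_f (fun a p => a :: p)); [rewrite mem_enum | exact: IH].
Qed.

Definition spathb (T : finType) (g : rel T) x y p :=
  [&& path g x p, uniq (x :: p) & last x p == y].

Lemma spathE (T : finType) (g : rel T) x y p : spath g x y p <-> spathb g x y p.
Proof.
split; first by case=> [h1 h2 h3]; rewrite /spathb h1 h2 h3 eqxx.
by case/and3P => h1 h2 /eqP h3.
Qed.

Definition Dist (R : realFieldType) (T : finType) (e : rel T) (w : T -> T -> R) x y :=
  lmin (spathb e x y) (fun p => Some (wlen w x p)) (allseqs T #|T|).

Lemma DistP (R : realFieldType) (T : finType) (e : rel T) (w : T -> T -> R) x y :
  distI e w x y (Dist e w x y).
Proof.
apply: lminP; first exact: spathE.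
move=> p /and3P [_ hu _]; apply: mem_allseqs.
have := card_uniqP hu; move=> /= h.
move: (max_card (mem (x :: p))); rewrite h /=; exact: ltnW.
Qed.

Lemma distI_uniq (R : realFieldType) (T : finType) (e : rel T) (w : T -> T -> R) x y v :
  distI e w x y v -> v = Dist e w x y.
Proof. move=> h; exact: is_emin_uniq h (DistP e w x y). Qed.

Lemma last_rev_belast (T : finType) (x : T) p : last (last x p) (rev (belast x p)) = x.
Proof.
have -> : last (last x p) (rev (belast x p)) = last x (last x p :: rev (belast x p)) by [].
by rewrite -rev_rcons -lastI rev_cons last_rcons.
Qed.

Lemma wlen_rcons (R : realFieldType) (T : finType) (w : T -> T -> R) x p z :
  wlen w x (rcons p z) = wlen w x p + w (last x p) z.
Proof. by rewrite -cats1 wlen_cat /= addr0. Qed.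

Lemma wlen_rev (R : realFieldType) (T : finType) (e : rel T) (w : T -> T -> R) x p :
  (forall a b, e a b -> w a b = w b a) -> path e x p ->
  wlen w (last x p) (rev (belast x p)) = wlen w x p.
Proof.
move=> hw; elim: p x => //= z p IH x /andP [hxz hp].
rewrite rev_cons wlen_rcons IH // last_rev_belast (hw _ _ hxz) addrC.
by [].
Qed.

Lemma spath_rev (R : realFieldType) (T : finType) (e : rel T) (w : T -> T -> R) x y p :
  symmetric e -> (forall a b, e a b -> w a b = w b a) -> spath e x y p ->
  spath e y x (rev (belast x p)) /\ wlen w y (rev (belast x p)) = wlen w x p.
Proof.
move=> se hw [hp hu hl]; rewrite -hl; split; last exact: wlen_rev hp.
split.
- by rewrite rev_path (@eq_path _ _ e) // => a b /=; rewrite se.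
- by rewrite -rev_rcons -lastI rev_uniq.
- exact: last_rev_belast.
Qed.

Lemma distI_rev (R : realFieldType) (T : finType) (e : rel T) (w : T -> T -> R) x y v :
  symmetric e -> (forall a b, e a b -> w a b = w b a) ->
  distI e w x y v -> distI e w y x v.
Proof.
move=> se hw [[[p [hp <-]]|[hn ->]] h2]; split.
- have [hq wq] := spath_rev (w:=w) se hw hp.
  by left; exists (rev (belast x p)); rewrite wq.
- move=> q hq; have [hq' wq'] := spath_rev (w:=w) se hw hq.
  by rewrite -wq'; apply: h2.
- by right; split => // q hq; have [hq' _] := spath_rev (w:=w) se hw hq; exact: hn hq'.
- move=> q hq; have [hq' wq'] := spath_rev (w:=w) se hw hq.
  by rewrite -wq'; apply: h2.
Qed.

Lemma Dist_sym (R : realFieldType) (T : finType) (e : rel T) (w : T -> T -> R) x y :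
  symmetric e -> (forall a b, e a b -> w a b = w b a) -> Dist e w x y = Dist e w y x.
Proof. move=> se hw; apply: distI_uniq; apply: distI_rev => //; exact: DistP. Qed.

Lemma Dist_tri (R : realFieldType) (T : finType) (e : rel T) (w : T -> T -> R) x z y :
  (forall a b, e a b -> 0 <= w a b) ->
  ele (Dist e w x y) (eadd (Dist e w x z) (Dist e w z y)).
Proof.
move=> hw; case: (DistP e w x z) => -[[p1 [[h1p h1u h1l] <-]]|[_ ->]] _; last by case: (Dist e w x y).
case: (DistP e w z y) => -[[p2 [[h2p h2u h2l] <-]]|[_ ->]] _; last by case: (Dist e w x y).
have hp : path e x (p1 ++ p2) by rewrite cat_path h1p h1l h2p.
have [q [hq wq]] := shorten_w (w:=w) hw hp.
move: hq; rewrite last_cat h1l h2l => hq.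
have [_ h] := DistP e w x y.
apply: ele_trans (h q hq) _ => /=.
by move: wq; rewrite wlen_cat h1l.
Qed.


Lemma fold_emin (R : realFieldType) (T : finType) (c : pred T) (g : T -> ext R) l acc :
  let v := foldl (fun acc z => if c z then emin acc (g z) else acc) acc l in
  ele v acc /\ (forall z, z \in l -> c z -> ele v (g z)).
Proof.
elim: l acc => [|z l IH] acc /=; first by split => //; exact: ele_refl.
have [h1 h2] := IH (if c z then emin acc (g z) else acc).
have hz : ele (if c z then emin acc (g z) else acc) acc.
  by case: (c z); [exact: emin_l | exact: ele_refl].
split; first exact: ele_trans h1 hz.
move=> z'; rewrite in_cons => /orP [/eqP -> cz|hz' cz]; last exact: h2.
by apply: ele_trans h1 _; rewrite cz; exact: emin_r.
Qed.

Lemma fold_emin_lb (R : realFieldType) (T : finType) (c : pred T) (g : T -> ext R) l acc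
  (P : ext R -> Prop) :
  P acc -> (forall a z, P a -> c z -> P (emin a (g z))) ->
  P (foldl (fun acc z => if c z then emin acc (g z) else acc) acc l).
Proof.
move=> h0 hs; elim: l acc h0 => //= z l IH acc h0; apply: IH.
by case: (boolP (c z)) => cz //; apply: hs.
Qed.

Lemma uniq_last_self (T : finType) (v : T) q : uniq (v :: q) -> last v q = v -> q = [::].
Proof.
case: q => // z q /= /andP [hv _] hl; move: hv; rewrite -hl.
by have := mem_last z q => ->.
Qed.

Lemma updown_first (T : finType) (s : seq T) x v1 q :
  updown s x (v1 :: q) -> (rank s x < rank s (last v1 q))%N -> (rank s x < rank s v1)%N.
Proof.
case/existsP => -[[|j] hj] /andP [ht hd] hl /=.
- move: hd; rewrite drop0 /= => /andP [h1 h2].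
  have tr : transitive (fun a b : T => rank s b < rank s a)%N.
    by move=> b a c h h'; exact: ltn_trans h' h.
  have hp : path (fun a b : T => rank s b < rank s a)%N x (v1 :: q) by rewrite /= h1 h2.
  have /= h := allP (order_path_min tr hp) _ (mem_last v1 q).
  move: (ltn_trans hl h); by rewrite ltnn.
- by move: ht => /= /andP [].
Qed.

Lemma upd_sym (R : realFieldType) (T : finType) (m : T -> T -> ext R) x y v a b :
  m a b = m b a -> upd m x y v a b = upd m x y v b a.
Proof.
move=> h; rewrite /upd [in RHS](andbC (b == x)) [in RHS](andbC (b == y)) [in RHS]orbC.
by case: ifP.
Qed.

Lemma upd_cases (R : realFieldType) (T : finType) (m : T -> T -> ext R) x y v a b :
  (upd m x y v a b = v /\ ((a = x /\ b = y) \/ (a = y /\ b = x))) \/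
  (upd m x y v a b = m a b /\ ~~ (((a == x) && (b == y)) || ((a == y) && (b == x)))).
Proof.
rewrite /upd; case: ifP => h; [left | right]; split => //.
by case/orP: h => /andP [/eqP -> /eqP ->]; [left|right].
Qed.

Definition Inv (R : realFieldType) (T : finType) (e : rel T) (w : T -> T -> R)
  (s : seq T) (mC m : T -> T -> ext R) (pre : seq (T * T)) : Prop :=
  [/\ (forall a b, gstar e s a b -> m a b = m b a),
      (forall a b, gstar e s a b -> ele (Dist e w a b) (m a b)),
      (forall a b, gstar e s a b -> ele (m a b) (mC a b)) &
      (forall a b, (a, b) \in pre -> m a b = Dist e w a b)].


Lemma in_pre (T : finType) (s : seq T) (es pre post : seq (T * T)) x y a b :
  sorted (fun a b => rank s b.1 <= rank s a.1)%N es ->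
  es = pre ++ (x, y) :: post -> (a, b) \in es -> (rank s x < rank s a)%N ->
  (a, b) \in pre.
Proof.
move=> so E; rewrite E mem_cat in_cons => /orP [//|/orP [/eqP [-> _]|hp]] hr.
  by rewrite ltnn in hr.
have tr : transitive (fun a b : T * T => rank s b.1 <= rank s a.1)%N.
  by move=> b0 a0 c0 h h'; exact: leq_trans h' h.
move: so; rewrite E sorted_cat_cons => /andP [_ hpath].
have /= h := allP (order_path_min tr hpath) _ hp.
by move: (leq_trans hr h); rewrite ltnn.
Qed.

Lemma step_inv (R : realFieldType) (T : finType) (e : rel T) (w : T -> T -> R)
  (s : seq T) (mC m : T -> T -> ext R) (es pre post : seq (T * T)) x y :
  irreflexive e -> symmetric e -> (forall a b, e a b -> w a b = w b a) ->
  (forall a b, e a b -> 0 < w a b) ->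
  (forall v, v \in s) -> (forall a b, gstar e s a b -> mC a b = mC b a) ->
  customized e w s mC ->
  uniq es -> (forall a b, ((a, b) \in es) = gstar e s a b && (rank s a < rank s b)%N) ->
  sorted (fun a b => rank s b.1 <= rank s a.1)%N es ->
  es = pre ++ (x, y) :: post ->
  Inv e w s mC m pre -> Inv e w s mC (perfect_step e s m (x, y)) (rcons pre (x, y)).
Proof.
move=> ie se hws hwp hs hmCs [hresp hud] hu hes hso E [I0 I1 I2 I3].
have hxy : (x, y) \in es by rewrite E mem_cat mem_head orbT.
move: (hxy); rewrite hes => /andP [gxy rxy].
have gsym := gs_sym s se.
have hw0 : forall a b, e a b -> 0 <= w a b by move=> a b h; exact: ltW (hwp a b h).
have Dsym : forall a b, Dist e w a b = Dist e w b a by move=> a b; apply: Dist_sym.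
have proc : forall a b, gstar e s a b -> (rank s x < rank s a)%N ->
    (rank s x < rank s b)%N -> a != b -> m a b = Dist e w a b.
  move=> a b gab ra rb ab; case: (ltngtP (rank s a) (rank s b)) => h.
  - by apply: I3; apply: in_pre hso E _ ra; rewrite hes gab h.
  - rewrite I0 // I3; first exact: Dsym.
    apply: in_pre hso E _ rb; by rewrite hes gsym gab h.
  - by move: ab; rewrite (rank_inj hs h) eqxx.
pose c := fun z => [&& z != y, (rank s x < rank s z)%N, gstar e s x z & gstar e s z y].
pose g := fun z => eadd (m x z) (m z y).
pose v := foldl (fun acc z => if c z then emin acc (g z) else acc) (m x y) (enum T).
have Ev : perfect_step e s m (x, y) = upd m x y v by [].
have [hv1 hv2] := fold_emin c g (enum T) (m x y).
have lb : ele (Dist e w x y) v.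
  apply: (@fold_emin_lb _ _ c g (enum T) (m x y) (fun a => ele (Dist e w x y) a)); first exact: I1.
  move=> a z ha /and4P [zy rz gxz gzy]; apply: emin_glb => //.
  apply: ele_trans (@Dist_tri _ _ e w x z y hw0) _.
  by apply: eadd_mono; apply: I1.
have ub : ele v (Dist e w x y).
  have := DistP e w x y => /hresp /hud [[[p [[[pp pu pl] hudp] hl]] | [_ ->]] _];
    last by case: (v).
  case: p pp pu pl hudp hl => [|v1 q] pp pu pl hudp hl.
  - by move: pl => /= pl; move: gxy; rewrite -pl (gs_irr s ie).
  - case: (boolP (v1 == y)) => [/eqP v1y | v1y].
    + have q0 : q = [::].
        apply: (@uniq_last_self _ v1); first by case/andP: pu.
        by move: pl => /= ->; rewrite v1y.
      subst q v1; move: hl => /= <-; rewrite eadd_0.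
      exact: ele_trans hv1 (I2 _ _ gxy).
    + have gxv1 : gstar e s x v1 by case/andP: pp.
      have pq : path (gstar e s) v1 q by case/andP: pp.
      have uq : uniq (v1 :: q) by case/andP: pu.
      have lq : last v1 q = y := pl.
      have rv1 : (rank s x < rank s v1)%N by apply: (updown_first hudp); rewrite lq.
      have gv1y : gstar e s v1 y := gs_clique se hs gxv1 gxy rv1 rxy v1y.
      have cv1 : c v1 by rewrite /c v1y rv1 gxv1 gv1y.
      apply: ele_trans (hv2 v1 _ cv1) _; first by rewrite mem_enum.
      rewrite -hl /= /g (proc v1 y gv1y rv1 rxy v1y).
      apply: eadd_mono; first exact: I2.
      have [_ hA] := hresp _ _ _ (DistP e w v1 y); apply: hA.
      by split.
have Vd : v = Dist e w x y by apply: ele_anti.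
rewrite Ev; split.
- move=> a b gab; apply: upd_sym; exact: I0.
- move=> a b gab; case: (upd_cases m x y v a b) => -[-> hc]; last exact: I1.
  rewrite Vd; case: hc => -[-> ->]; [exact: ele_refl | rewrite Dsym; exact: ele_refl].
- move=> a b gab; case: (upd_cases m x y v a b) => -[-> hc]; last exact: I2.
  case: hc => -[-> ->]; first exact: ele_trans hv1 (I2 _ _ gxy).
  rewrite hmCs; last by rewrite gsym.
  exact: ele_trans hv1 (I2 _ _ gxy).
- move=> a b; rewrite mem_rcons in_cons => /orP [/eqP [-> ->]|hab].
  + by rewrite /upd !eqxx /= Vd.
  + case: (upd_cases m x y v a b) => -[-> hc]; last exact: I3.
    exfalso.
    have xyn : (x, y) \notin pre.
      by move: hu; rewrite E cat_uniq => /and3P [_ /= h _]; move: h; rewrite negb_or => /andP [].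
    case: hc => -[ea eb]; subst a b; first by rewrite hab in xyn.
    have : (y, x) \in es by rewrite E mem_cat hab.
    rewrite hes => /andP [_ h]; move: (ltn_trans h rxy); by rewrite ltnn.
Qed.


Lemma inv_all (R : realFieldType) (T : finType) (e : rel T) (w : T -> T -> R)
  (s : seq T) (mC : T -> T -> ext R) (es : seq (T * T)) :
  irreflexive e -> symmetric e -> (forall a b, e a b -> w a b = w b a) ->
  (forall a b, e a b -> 0 < w a b) ->
  (forall v, v \in s) -> (forall a b, gstar e s a b -> mC a b = mC b a) ->
  customized e w s mC ->
  uniq es -> (forall a b, ((a, b) \in es) = gstar e s a b && (rank s a < rank s b)%N) ->
  sorted (fun a b => rank s b.1 <= rank s a.1)%N es ->
  forall pre post, es = pre ++ post ->
  Inv e w s mC (foldl (perfect_step e s) mC pre) pre.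
Proof.
move=> ie se hws hwp hs hmCs hcust hu hes hso pre.
elim/last_ind: pre => [|pre [x y] IH] post E.
- split => //=.
  + move=> a b gab; have [hresp _] := hcust.
    have [_ hA] := hresp _ _ _ (DistP e w a b).
    have := hA [:: b]; rewrite /= eadd_0; apply; split => //=.
    * by rewrite gab.
    * rewrite inE andbT; apply/eqP => h; move: gab; by rewrite h (gs_irr s ie).
  + move=> a b _; exact: ele_refl.
- rewrite foldl_rcons.
  have E' : es = pre ++ (x, y) :: post by rewrite E cat_rcons.
  apply: (step_inv ie se hws hwp hs hmCs hcust hu hes hso E').
  exact: IH E'.
Qed.

Unset Implicit Arguments.
Theorem mainTheorem6 (R : realFieldType) (T : finType) (e : rel T)
  (w : T -> T -> R) (s : seq T) (mC : T -> T -> ext R) (es : seq (T * T)) :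
  irreflexive e -> symmetric e -> (forall x y, connect e x y) ->
  (forall x y, e x y -> w x y = w y x) ->
  (forall x y, e x y -> 0 < w x y) ->
  uniq s -> (forall v, v \in s) ->
  (forall x y, gstar e s x y -> mC x y = mC y x) ->
  (forall x y, gstar e s x y -> epos (mC x y)) ->
  customized e w s mC ->
  uniq es ->
  (forall x y, ((x, y) \in es) = gstar e s x y && (rank s x < rank s y)%N) ->
  sorted (fun a b => rank s b.1 <= rank s a.1)%N es ->
  forall x y, gstar e s x y ->
    distI e w x y (perfect_customization e s mC es x y).
Proof.
move=> ie se _ hws hwp _ hs hmCs _ hcust hu hes hso x y gxy.
have [I0 _ _ I3] := inv_all ie se hws hwp hs hmCs hcust hu hes hso (post := [::])
  (esym (cats0 es)).
rewrite /perfect_customization.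
case: (ltngtP (rank s x) (rank s y)) => h.
- rewrite I3; [exact: DistP | by rewrite hes gxy h].
- rewrite I0 // I3; last by rewrite hes (gs_sym s se) gxy h.
  rewrite Dist_sym //; exact: DistP.
- by move: gxy; rewrite (rank_inj hs h) (gs_irr s ie).
Qed.
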